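(* Let $n\ge 1$, let $x_0,\dots,x_n$ be pairwise distinct points of $[-1,1]$, let $\omega\in\mathbb{R}\setminus\{0\}$ and let $f_0,\dots,f_n\in\mathbb{C}$. Then the $(n+1)\times(n+1)$ matrix $T(B+i\omega E)$ is nonsingular. Consequently the collocation system $T(B+i\omega E)c=f$, equivalently $$\sum_{k=0}^n c_k T_k'(x_j)+i\omega\sum_{k=0}^n c_kT_k(x_j)=f_j,\qquad j=0,\dots,n,$$ has a unique solution $c=(c_0,\dots,c_n)^{\mathsf T}\in\mathbb{C}^{n+1}$; that is, there is exactly one polynomial $p(x)=\sum_{k=0}^n c_kT_k(x)$ of degree at most $n$ with $p'(x_j)+i\omega p(x_j)=f_j$ for all $j$.
   Context: $T_k$ denotes the Chebyshev polynomial of the first kind of degree $k$. $T$ is the $(n+1)\times(n+1)$ matrix with rows indexed by nodes and columns by degree: $T_{jk}=T_k(x_j)$, $j,k=0,\dots,n$. $B$ is the Chebyshev spectral differentiation matrix: $B_{ik}=2k/r_i$ if $k>i$ and $i+k$ is odd, and $B_{ik}=0$ otherwise ($0\le i,k\le n$), where $r_0=2$ and $r_i=1$ for $i\ge1$; it satisfies $\frac{d}{dx}\sum_k c_kT_k=\sum_i (Bc)_iT_i$. $E$ is the identity matrix. *)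

(* Defs.v *)
From HB Require Import structures.
From mathcomp Require Import all_boot all_order all_algebra.
From mathcomp Require Import complex.
From mathcomp Require Import reals.
Set Implicit Arguments. Unset Strict Implicit. Unset Printing Implicit Defensive.
Import Order.TTheory GRing.Theory Num.Theory.
Local Open Scope ring_scope.
Local Open Scope complex_scope.

Fixpoint cheb_pair (R : nzRingType) (k : nat) : {poly R} * {poly R} :=
  match k with
  | 0%N => (1, 'X)
  | k'.+1 => let: (p, q) := cheb_pair R k' in (q, 2%:R *: 'X * q - p)
  end.
Definition chebT (R : nzRingType) (k : nat) : {poly R} := (cheb_pair R k).1.

Definition chebTmx (R : rcfType) (n : nat) (x : 'I_n.+1 -> R) : 'M[R[i]]_n.+1 :=
  \matrix_(j < n.+1, k < n.+1) ((chebT R k).[x j])%:C.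

Definition cheb_r (R : nzRingType) (i : nat) : R := if i == 0%N then 2%:R else 1.

(* Chebyshev spectral differentiation matrix:
   B_{ik} = 2k / r_i if k > i and i + k odd, 0 otherwise. *)
Definition chebBmx (R : rcfType) (n : nat) : 'M[R[i]]_n.+1 :=
  \matrix_(i < n.+1, k < n.+1)
    (if (i < k)%N && odd (i + k) then ((2 * k)%:R / cheb_r R i)%:C else 0).

(* Main.v *)
Require Import Defs.
From HB Require Import structures.
From mathcomp Require Import all_boot all_order all_algebra.
From mathcomp Require Import complex.
From mathcomp Require Import reals.
Import Order.TTheory GRing.Theory Num.Theory.
Local Open Scope ring_scope.
Local Open Scope complex_scope.

Section S.
Variable R : realType.

Lemma cheb_pair_size k :
  size (cheb_pair R k).1 = k.+1 /\ size (cheb_pair R k).2 = k.+2.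
Proof.
elim: k => [|k [IH1 IH2]] /=; first by rewrite size_poly1 size_polyX.
case E: (cheb_pair R k) => [p q] /=; rewrite E /= in IH1 IH2.
split => //.
have h2 : size (2%:R *: 'X * q) = k.+3.
  rewrite -scalerAl size_scale ?pnatr_eq0 // mulrC size_mulX ?IH2 //.
  by rewrite -size_poly_eq0 IH2.
by rewrite size_polyDl h2 // size_polyN IH1 ltnS ltnW.
Qed.

Lemma size_chebT k : size (chebT R k) = k.+1.
Proof. by case: (cheb_pair_size k). Qed.

Definition Tc k : {poly R[i]} := map_poly (real_complex R) (chebT R k).

Lemma size_Tc k : size (Tc k) = k.+1.
Proof. by rewrite size_map_inj_poly ?size_chebT //; exact: complexI. Qed.

Lemma Tc_indep m (a : nat -> R[i]) :
  \sum_(k < m) a k *: Tc k = 0 -> forall k, (k < m)%N -> a k = 0.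
Proof.
elim: m => [|m IH] H k; first by [].
move: H; rewrite big_ord_recr /= => H.
have am : a m = 0.
  have := congr1 (fun p : {poly R[i]} => p`_m) H.
  rewrite coefD coefZ coef_sum coef0 big1 ?add0r.
    move/eqP; rewrite mulf_eq0 => /orP[/eqP //|].
    have : lead_coef (Tc m) != 0 by rewrite lead_coef_eq0 -size_poly_eq0 size_Tc.
    by rewrite /lead_coef size_Tc /= => /negPf ->.
  move=> i _; rewrite coefZ nth_default ?mulr0 // size_Tc.
  exact: ltn_ord.
rewrite ltnS leq_eqVlt => /orP[/eqP -> //|]; apply: IH.
by rewrite am scale0r addr0 in H.
Qed.

Lemma size_deriv_le (p : {poly R[i]}) : (size p^`() <= size p)%N.
Proof.
have [->|p0] := eqVneq p 0; first by rewrite deriv0.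
exact/ltnW/lt_size_deriv.
Qed.

Lemma deriv_eq0 (p : {poly R[i]}) (a : R[i]) :
  a != 0 -> p^`() + a *: p = 0 -> p = 0.
Proof.
move=> a0 H; apply/eqP; apply: contraT => p0.
have : size p^`() = size (a *: p).
  by rewrite -(addr0_eq H) size_polyN.
by rewrite size_scale // => E; have := lt_size_deriv p0; rewrite E ltnn.
Qed.

Lemma roots_eq0 n (x : 'I_n.+1 -> R) (p : {poly R[i]}) :
  injective x -> (size p <= n.+1)%N -> (forall j, p.[(x j)%:C] = 0) -> p = 0.
Proof.
move=> xi sp H.
apply: (@roots_geq_poly_eq0 _ p [seq (x j)%:C | j <- enum 'I_n.+1]).
- by apply/allP => z /mapP [j _ ->]; apply/rootP.
- rewrite map_inj_uniq ?enum_uniq // => i j /complexI; exact: xi.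
- by rewrite size_map size_enum_ord.
Qed.

Lemma unit_of_inj n (A : 'M[R[i]]_n) :
  (forall c : 'cV_n, A *m c = 0 -> c = 0) -> A \in unitmx.
Proof.
move=> H; rewrite -unitmx_tr -row_free_unit -kermx_eq0; apply/eqP.
set K := kermx _.
have KA : K *m A^T = 0 by apply/sub_kermxP.
have AK : A *m K^T = 0 by rewrite -[A]trmxK -trmx_mul KA trmx0.
apply/matrixP => i j; rewrite mxE.
have := congr1 (fun M : 'cV_n => M j 0) (H (col i K^T) _).
  rewrite !mxE => -> //.
by rewrite colE mulmxA AK mul0mx.
Qed.

Lemma unit_exu n (A : 'M[R[i]]_n) (f : 'cV_n) :
  A \in unitmx -> exists! c : 'cV_n, A *m c = f.
Proof.
move=> Au; exists (invmx A *m f); split; first by rewrite mulKVmx.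
by move=> c <-; rewrite mulKmx.
Qed.

Lemma size_sumTc n (c : 'I_n.+1 -> R[i]) :
  (size (\sum_(k < n.+1) c k *: Tc k)%R <= n.+1)%N.
Proof.
apply: (big_ind (fun q : {poly R[i]} => size q <= n.+1)%N) => //.
- by rewrite size_poly0.
- by move=> p q hp hq; rewrite (leq_trans (size_polyD _ _)) // geq_max hp hq.
- move=> k _; rewrite (leq_trans (size_scale_leq _ _)) // size_Tc; exact: ltn_ord.
Qed.

Lemma sumTc_eq0 n (c : 'cV[R[i]]_n.+1) :
  \sum_(k < n.+1) c k 0 *: Tc k = 0 -> c = 0.
Proof.
move=> H; apply/matrixP => k j; rewrite (ord1 j) mxE.
have := @Tc_indep n.+1 (fun k => c (inord k) 0).
rewrite -(inord_val k); apply => //.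
rewrite -[RHS]H; apply: eq_bigr => i _; by rewrite inord_val.
Qed.
End S.

Lemma evalTc (R : realType) n (c : 'cV[R[i]]_n.+1) (r : R) :
  (\sum_(k < n.+1) c k 0 *: Tc R k).[r%:C]
  = \sum_(k < n.+1) c k 0 * ((chebT R k).[r])%:C.
Proof.
rewrite horner_sum; apply: eq_bigr => k _.
by rewrite hornerZ /Tc horner_map.
Qed.

Lemma evalTc' (R : realType) n (c : 'cV[R[i]]_n.+1) (r : R) :
  (\sum_(k < n.+1) c k 0 *: Tc R k)^`().[r%:C]
  = \sum_(k < n.+1) c k 0 * ((chebT R k)^`().[r])%:C.
Proof.
rewrite linear_sum horner_sum; apply: eq_bigr => k _.
rewrite linearZ hornerZ /Tc; congr (_ * _); have E := deriv_map (real_complex R) (chebT R k); rewrite -horner_map -E; reflexivity.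
Qed.

Theorem mainTheorem1 (R : realType) (n : nat) (x : 'I_n.+1 -> R)
    (omega : R) (f : 'cV[R[i]]_n.+1) :
  (1 <= n)%N ->
  injective x ->
  (forall j, -1 <= x j <= 1) ->
  omega != 0 ->
  let M := chebTmx x *m (chebBmx R n + ('i * omega%:C) *: 1%:M) in
  [/\ M \in unitmx,
      exists! c : 'cV[R[i]]_n.+1, M *m c = f &
      exists! c : 'cV[R[i]]_n.+1,
        forall j : 'I_n.+1,
          \sum_(k < n.+1) c k 0 * ((chebT R k)^`().[x j])%:C
          + 'i * omega%:C * \sum_(k < n.+1) c k 0 * ((chebT R k).[x j])%:C
          = f j 0].
Proof.
move=> _ xi _ om0 M.
set a := 'i * omega%:C.
have a0 : a != 0.
  rewrite mulf_neq0 //; first by apply/eqP => -[] /eqP; rewrite oner_eq0.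
  by apply: contra om0 => /eqP [] ->.
have Tu : chebTmx x \in unitmx.
  apply: unit_of_inj => c Hc; apply: sumTc_eq0.
  apply: (@roots_eq0 R n x _ xi (@size_sumTc R n (fun k => c k 0))).
  move=> j; rewrite evalTc; have := congr1 (fun M : 'cV_n.+1 => M j 0) Hc.
  rewrite !mxE => E; rewrite -[RHS]E; apply: eq_bigr => k _; by rewrite !mxE mulrC.
have Du : chebBmx R n + a *: 1%:M \in unitmx.
  rewrite -unitmx_tr unitmxE det_trig.
    rewrite unitfE prodf_seq_neq0; apply/allP => i _ /=.
    by rewrite !mxE ltnn /= add0r eqxx mulr1.
  apply/is_trig_mxP => i j lij; rewrite !mxE.
  rewrite ltnNge (ltnW lij) /= add0r.
  by rewrite (_ : (j == i) = false) ?mulr0 //; apply/eqP => E; rewrite E ltnn in lij.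
have Mu : M \in unitmx by rewrite unitmx_mul Tu Du.
split => //; first exact: unit_exu.
pose N := \matrix_(j < n.+1, k < n.+1)
  (((chebT R k)^`().[x j])%:C + a * ((chebT R k).[x j])%:C).
have NE (c : 'cV_n.+1) j : (N *m c) j 0 = \sum_(k < n.+1) c k 0 * ((chebT R k)^`().[x j])%:C
          + a * \sum_(k < n.+1) c k 0 * ((chebT R k).[x j])%:C.
  rewrite mxE mulr_sumr -big_split; apply: eq_bigr => k _.
  by rewrite mxE /= mulrDl !(mulrC _ (c k 0)) mulrCA.
have Nu : N \in unitmx.
  apply: unit_of_inj => c Hc; apply: sumTc_eq0.
  apply: (@deriv_eq0 R _ a a0).
  apply: (@roots_eq0 R n x _ xi).
    rewrite (leq_trans (size_polyD _ _)) // geq_max.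
    rewrite (leq_trans (size_deriv_le _ _)) ?(@size_sumTc R n (fun k => c k 0)) //.
    by rewrite (leq_trans (size_scale_leq _ _)) ?(@size_sumTc R n (fun k => c k 0)).
  move=> j; rewrite hornerD hornerZ evalTc evalTc' -NE Hc mxE //.
have [c [Hc Hu]] := @unit_exu R _ N f Nu.
exists c; split.
  by move=> j; rewrite -NE Hc.
move=> c' Hc'; apply: Hu; apply/matrixP => j k; rewrite (ord1 k) NE.
exact: Hc'.
Qed.
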